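(* Let $\epsilon>0$, $\beta>1$, $\theta\in(0,1)$, $T\in\mathbb{N}$, and $B\ge T$, and set $k=\lfloor B/T\rfloor+1$. Let $r>0$ denote the optimal clustering radius for $\lceil\beta k\rceil$ clusters. Then there exists an instance of the UVP problem (with total budget $B$, maximum per-configuration budget $T$, smoothness parameter $\epsilon$) satisfying the concavity assumption, whose configuration set has optimal $\lceil\beta k\rceil$-center radius $r$, such that no algorithm can achieve an expected accuracy exceeding $\left(\theta+\frac{1}{\theta(\beta-1)}\right)(1-\epsilon r)\cdot A(\mathbf{x}^\star,T)$, where $\mathbf{x}^\star$ denotes the optimal configuration.
   Context: UVP problem: $A:\mathbb{R}^d\times[T]\to[0,1]$ is unknown ($[T]=\{1,\dots,T\}$); a finite $\mathcal{X}\subset\mathbb{R}^d$ is known; goal $\max_{b_1,\dots,b_n}\max_iA(\mathbf{x}_i,b_i)$ subject to $\sum_ib_i\le B$; obtaining $A(\mathbf{x},b)$ requires evaluating $A(\mathbf{x},1),\dots,A(\mathbf{x},b)$ in sequence, costing $b$ units. Instances satisfy Assumption 1 (monotonicity): $b_1\le b_2\Rightarrow A(\mathbf{x},b_1)\le A(\mathbf{x},b_2)$, and Assumption 2 (smoothness): for all $\mathbf{x}_i,\mathbf{x}_j\in\mathcal{X}$, $\min_{b\in[T]}A(\mathbf{x}_i,b)/A(\mathbf{x}_j,b)\ge1-\epsilon\|\mathbf{x}_i-\mathbf{x}_j\|_2$ (ratio $=1$ if both are $0$, $+\infty$ if only the denominator is $0$). Concavity assumption: for all $\mathbf{x}\in\mathcal{X}$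 and $b\in\{2,\dots,T-1\}$, $A(\mathbf{x},b+1)-A(\mathbf{x},b)\le A(\mathbf{x},b)-A(\mathbf{x},b-1)$. The optimal clustering radius for $m$ clusters is $\min_{\mathcal{C}\subseteq\mathcal{X},|\mathcal{C}|=m}\max_{\mathbf{x}\in\mathcal{X}}\min_{\mathbf{c}\in\mathcal{C}}\|\mathbf{x}-\mathbf{c}\|_2$. $\mathbf{x}^\star$ maximizes $A(\cdot,T)$ over $\mathcal{X}$. An algorithm (possibly randomized) adaptively evaluates values within budget $B$ and outputs $\mathbf{x}^{Alg}$; its expected accuracy is $\mathbb{E}[A(\mathbf{x}^{Alg},T)]$. *)

(* Defs.v *)
From HB Require Import structures.
From mathcomp Require Import all_boot all_order all_algebra.
From mathcomp Require Import reals.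
Set Implicit Arguments. Unset Strict Implicit. Unset Printing Implicit Defensive.
Import Order.TTheory GRing.Theory Num.Theory.
Local Open Scope ring_scope.

Section UVP.
Variable R : realType.

Definition dist2 (d : nat) (x y : 'rV[R]_d) : R :=
  Num.sqrt (\sum_(i < d) (x 0 i - y 0 i) ^+ 2).

(* r is the optimal clustering radius of X for m clusters:
   min_{C subset X, |C| = m} max_{x in X} min_{c in C} ||x - c||_2 = r. *)
Definition opt_cluster_radius (d : nat) (X : seq 'rV[R]_d) (m : nat) (r : R)
  : Prop :=
  (exists C : seq 'rV[R]_d, [/\ uniq C, {subset C <= X}, size C = m &
      forall x, x \in X -> exists2 c, c \in C & dist2 x c <= r])
  /\ (forall C : seq 'rV[R]_d, uniq C -> {subset C <= X} -> size C = m ->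
      exists2 x, x \in X & forall c, c \in C -> r <= dist2 x c).

(* "ratio a/b >= c" with the paper's convention: ratio = 1 if a = b = 0,
   +oo if only the denominator b is 0. *)
Definition ratio_ge (a b c : R) : Prop :=
  (b = 0 -> a = 0 -> c <= 1) /\ (b <> 0 -> c <= a / b).

Definition uvp_range (d T : nat) (A : 'rV[R]_d -> nat -> R) : Prop :=
  forall x b, (1 <= b <= T)%N -> 0 <= A x b <= 1.

Definition uvp_monotone (d T : nat) (A : 'rV[R]_d -> nat -> R) : Prop :=
  forall x b1 b2, (1 <= b1)%N -> (b1 <= b2)%N -> (b2 <= T)%N -> A x b1 <= A x b2.

Definition uvp_smooth (d T : nat) (X : seq 'rV[R]_d) (eps : R)
  (A : 'rV[R]_d -> nat -> R) : Prop :=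
  forall xi xj, xi \in X -> xj \in X -> forall b, (1 <= b <= T)%N ->
    ratio_ge (A xi b) (A xj b) (1 - eps * dist2 xi xj).

Definition uvp_concave (d T : nat) (X : seq 'rV[R]_d)
  (A : 'rV[R]_d -> nat -> R) : Prop :=
  forall x, x \in X -> forall b, (2 <= b)%N -> (b <= T.-1)%N ->
    A x b.+1 - A x b <= A x b - A x b.-1.

Definition is_dist (I : finType) (p : {ffun I -> R}) : Prop :=
  (forall i, 0 <= p i) /\ \sum_i p i = 1.

Definition history (n : nat) := seq ('I_n * R).

Definition level (n : nat) (h : history n) (i : 'I_n) : nat :=
  count (fun p => p.1 == i) h.

(* Expected final accuracy of a (randomized, adaptive) algorithm given as a
   behavioural strategy:
   - [q h] : distribution over [Some i] (pay one unit to evaluate the next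
     budget level of configuration i, i.e. A(x_i, level+1)) and [None] (stop);
   - [out h] : distribution of the output configuration given the history.
   [val i b] = A(x_i, b).  [f] is the remaining budget.  A query on a
   configuration already evaluated up to T stops the run. *)
Fixpoint exp_acc (n T : nat) (val : 'I_n -> nat -> R)
  (q : history n -> {ffun option 'I_n -> R})
  (out : history n -> {ffun 'I_n -> R}) (f : nat) (h : history n) : R :=
  let stop := \sum_j out h j * val j T in
  match f with
  | 0 => stop
  | f'.+1 =>
      q h None * stop +
      \sum_i q h (Some i) *
        (if (level h i < T)%N
         then exp_acc T val q out f' (rcons h (i, val i (level h i).+1))
         else stop)
  end.

End UVP.

(* Main.v *)
Require Import Defs.
From HB Require Import structures.
From mathcomp Require Import all_boot all_order all_algebra.
From mathcomp Require Import reals.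
From mathcomp Require Import lra zify ring.
Import Order.TTheory GRing.Theory Num.Theory.
Local Open Scope ring_scope.


Lemma sum_opt (R : realType) (I : finType) (F : option I -> R) :
  \sum_o F o = F None + \sum_i F (Some i).
Proof.
rewrite (bigD1 None) //=.
congr (_ + _).
rewrite (reindex_omap (@Some I) id); last by case=> [i|] //.
by apply: eq_bigl => i; rewrite eqxx.
Qed.

Lemma level_rcons (R : realType) n (h : history R n) i v i' :
  level (rcons h (i, v)) i' = (level h i' + (i == i'))%N.
Proof. by rewrite /level -cats1 count_cat /= addn0. Qed.

Section Prob.
Variables (R : realType) (n T : nat).
Variables (q : history R n -> {ffun option 'I_n -> R})
          (out : history R n -> {ffun 'I_n -> R}).
Hypotheses (hq : forall h, is_dist (q h)) (hout : forall h, is_dist (out h)).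

Fixpoint hit (val : 'I_n -> nat -> R) (mem : pred 'I_n) (t : nat) (f : nat)
  (h : history R n) : R :=
  let st := \sum_j out h j * (mem j)%:R in
  match f with
  | 0 => st
  | f'.+1 => q h None * st + \sum_i q h (Some i) *
      (if (level h i < T)%N then
         (if mem i && ((level h i).+1 == t.+1) then 1
          else hit val mem t f' (rcons h (i, val i (level h i).+1)))
       else st)
  end.

Lemma conv_le h (a F0 : R) (F : 'I_n -> R) :
  F0 <= a -> (forall i, F i <= a) ->
  q h None * F0 + \sum_i q h (Some i) * F i <= a.
Proof.
move=> H0 H; have [q0 q1] := hq h.
rewrite -[a]mul1r -q1 sum_opt mulrDl big_distrl /=.
apply: lerD; first by apply: ler_wpM2l.
by apply: ler_sum => i _; apply: ler_wpM2l.
Qed.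

Lemma conv_ge h (a F0 : R) (F : 'I_n -> R) :
  a <= F0 -> (forall i, a <= F i) ->
  a <= q h None * F0 + \sum_i q h (Some i) * F i.
Proof.
move=> H0 H; have [q0 q1] := hq h.
rewrite -[a]mul1r -q1 sum_opt mulrDl big_distrl /=.
apply: lerD; first by apply: ler_wpM2l.
by apply: ler_sum => i _; apply: ler_wpM2l.
Qed.

Lemma out_le h (a : R) (g : 'I_n -> R) :
  (forall j, g j <= a) -> \sum_j out h j * g j <= a.
Proof.
move=> H; have [o0 o1] := hout h.
rewrite -[a]mul1r -o1 big_distrl /=.
by apply: ler_sum => i _; apply: ler_wpM2l.
Qed.

Lemma out_ge h (a : R) (g : 'I_n -> R) :
  (forall j, a <= g j) -> a <= \sum_j out h j * g j.
Proof.
move=> H; have [o0 o1] := hout h.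
rewrite -[a]mul1r -o1 big_distrl /=.
by apply: ler_sum => i _; apply: ler_wpM2l.
Qed.

Lemma exp_le (val : 'I_n -> nat -> R) hi :
  (forall j, val j T <= hi) -> forall f h, exp_acc T val q out f h <= hi.
Proof.
move=> H; elim=> [|f IH] h /=; first exact: out_le.
apply: conv_le; first exact: out_le.
by move=> i; case: ifP => _ //; exact: out_le.
Qed.

Lemma exp_ge (val : 'I_n -> nat -> R) lo :
  (forall j, lo <= val j T) -> forall f h, lo <= exp_acc T val q out f h.
Proof.
move=> H; elim=> [|f IH] h /=; first exact: out_ge.
apply: conv_ge; first exact: out_ge.
by move=> i; case: ifP => _ //; exact: out_ge.
Qed.

Lemma b2R_le1 (b : bool) : ((b : nat)%:R : R) <= 1.
Proof. by case: b => /=; rewrite ?natr0 ?mulr1n ?ler01 ?lexx. Qed.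

Lemma hit_bounds val mem t f h : 0 <= hit val mem t f h <= 1.
Proof.
have st1 : forall h, \sum_j out h j * (mem j)%:R <= 1.
  by move=> h'; apply: out_le => j; exact: b2R_le1.
have st0 : forall h, 0 <= \sum_j out h j * (mem j)%:R.
  by move=> h'; apply: out_ge => j; rewrite ler0n.
elim: f h => [|f IH] h /=; first by rewrite st0 st1.
apply/andP; split.
  apply: conv_ge => // i; case: ifP => // _; case: ifP => // _.
  by case/andP: (IH (rcons h (i, val i (level h i).+1))).
apply: conv_le => // i; case: ifP => // _; case: ifP => // _.
by case/andP: (IH (rcons h (i, val i (level h i).+1))).
Qed.

Lemma comb_split h (a b c : R) (F G : 'I_n -> R) :
  q h None * (a + c * b) + \sum_i q h (Some i) * (F i + c * G i) =
  (q h None * a + \sum_i q h (Some i) * F i) +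
  c * (q h None * b + \sum_i q h (Some i) * G i).
Proof.
rewrite mulrDr [c * (_ + _)]mulrDr mulr_sumr.
rewrite [\sum_i q h (Some i) * (F i + c * G i)](eq_bigr
   (fun i => q h (Some i) * F i + c * (q h (Some i) * G i))); last first.
  by move=> i _; ring.
rewrite big_split /=; ring.
Qed.

Lemma coupling (val val' : 'I_n -> nat -> R) (mem : pred 'I_n) t lo hi :
  (forall j, lo <= val' j T) -> (forall j, val j T <= hi) ->
  (forall j, ~~ mem j -> val j T = val' j T) ->
  (forall i b, ~~ mem i || (b <= t)%N -> val i b = val' i b) ->
  forall f h, (forall i, mem i -> (level h i <= t)%N) ->
  exp_acc T val q out f h <=
  exp_acc T val' q out f h + (hi - lo) * hit val' mem t f h.
Proof.
move=> Hlo Hhi HO Hag.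
have Hst : forall h, \sum_j out h j * val j T <=
   \sum_j out h j * val' j T + (hi - lo) * \sum_j out h j * (mem j)%:R.
  move=> h; rewrite mulr_sumr -big_split /=; apply: ler_sum => j _.
  have [o0 _] := hout h.
  rewrite mulrCA -mulrDr; apply: ler_wpM2l => //.
  case: (boolP (mem j)) => mj.
    by rewrite mulr1; have := Hlo j; have := Hhi j; lra.
  by rewrite mulr0 addr0 HO.
elim=> [|f IH] h Inv /=; first exact: Hst.
rewrite -comb_split; apply: lerD.
  by have [q0 _] := hq h; apply: ler_wpM2l => //; exact: Hst.
apply: ler_sum => i _; have [q0 _] := hq h; apply: ler_wpM2l => //.
case: ifP => lT; last exact: Hst.
case: ifP => bad.
  rewrite mulr1; have := exp_le _ _ Hhi f (rcons h (i, val i (level h i).+1)).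
  have := exp_ge _ _ Hlo f (rcons h (i, val' i (level h i).+1)); lra.
have Hv : val i (level h i).+1 = val' i (level h i).+1.
  apply: Hag; case: (boolP (mem i)) => //= mi.
  have := Inv i mi; move: bad; rewrite mi /=; move/negbT; rewrite eqSS; lia.
rewrite Hv; apply: IH => i' mi'; rewrite level_rcons.
case: (eqVneq i i') => [Hii|_]; last by rewrite addn0; exact: Inv.
subst i'; have := Inv i mi'; move: bad; rewrite mi' /=; move/negbT; rewrite eqSS; lia.
Qed.

Definition phi (t l : nat) : R := if (l <= t)%N then l%:R else 0.
Definition Phi (t : nat) (h : history R n) : R := \sum_i phi t (level h i).

Lemma Phi_rcons t h i v :
  Phi t (rcons h (i, v)) = Phi t h + (phi t (level h i).+1 - phi t (level h i)).
Proof.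
rewrite /Phi.
rewrite (eq_bigr (fun i' => phi t (level h i') +
   (if i' == i then phi t (level h i).+1 - phi t (level h i) else 0))); last first.
  move=> i' _; rewrite level_rcons; case: (eqVneq i' i) => [->|ne].
    by rewrite /= addn1 addrC subrK.
  by rewrite /= addn0 addr0.
rewrite big_split /=; congr (_ + _).
by rewrite (bigD1 i) //= eqxx big1 ?addr0 // => j /negbTE ->.
Qed.

Lemma Phi_ge0 t h : 0 <= Phi t h.
Proof. by apply: sumr_ge0 => i _; rewrite /phi; case: ifP. Qed.

Lemma sum_if_le (J : finType) (c : J -> bool) (H : J -> R) :
  (forall j, 0 <= H j) ->
  \sum_j (if c j then 1 else H j) <= \sum_j ((c j)%:R : R) + \sum_j H j.
Proof.
move=> H0; rewrite -big_split /=; apply: ler_sum => j _.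
by case: (c j) => /=; rewrite ?mulr1n ?natr0 ?add0r ?lerDl // ler_wpDr.
Qed.

Lemma hit_sum (J : finType) (memf : J -> pred 'I_n) t val :
  (forall i, \sum_j ((memf j i)%:R : R) <= 1) ->
  forall f h, \sum_j hit val (memf j) t f h <= (f%:R + Phi t h) / (t.+1)%:R + 1.
Proof.
move=> Hm.
have Dp : 0 < (t.+1)%:R :> R by rewrite ltr0n.
have st1 : forall h, \sum_j \sum_i out h i * (memf j i)%:R <= 1.
  move=> h; rewrite exchange_big /=.
  under eq_bigr => i _ do rewrite -mulr_sumr.
  by apply: out_le => i; exact: Hm.
have rhs1 : forall (f : nat) h, 1 <= (f%:R + Phi t h) / (t.+1)%:R + 1.
  move=> f h; rewrite lerDr; apply: divr_ge0; last exact: ltW.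
  by apply: addr_ge0; [exact: ler0n | exact: Phi_ge0].
elim=> [|f IH] h /=.
  by apply: le_trans (st1 h) _; apply: rhs1.
rewrite big_split /= -mulr_sumr.
rewrite [X in _ + X <= _]exchange_big /=.
under [X in _ + X <= _]eq_bigr => i _ do rewrite -mulr_sumr.
apply: conv_le; first by apply: le_trans (st1 h) _; apply: rhs1.
move=> i; case lT : (level h i < T)%N; last by apply: le_trans (st1 h) _; apply: rhs1.
set h' := rcons h _.
have PhiE := Phi_rcons t h i (val i (level h i).+1).
rewrite -/h' in PhiE.
case: (eqVneq (level h i) t) => [Et|Nt].
  under eq_bigr => j _ do rewrite Et eqxx andbT.
  have H0 : forall j, 0 <= hit val (memf j) t f h'.
    by move=> j; case/andP: (hit_bounds val (memf j) t f h').
  have X1 := sum_if_le J (fun j => memf j i) _ H0. apply: le_trans X1 _.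
  apply: le_trans (lerD (Hm i) (IH h')) _.
  rewrite PhiE /phi Et leqnn ltnn /= add0r.
  have E : (f.+1%:R + Phi t h) / (t.+1)%:R =
           (f%:R + (Phi t h - t%:R)) / (t.+1)%:R + 1.
    rewrite -[f.+1]addn1 -[t.+1]addn1 !natrD; field.
    by apply: lt0r_neq0; have := ler0n R t; lra.
  by rewrite E addrC.
under eq_bigr => j _ do rewrite eqSS (negbTE Nt) andbF.
apply: le_trans (IH h') _.
have Hp : Phi t h' <= Phi t h + 1.
  rewrite PhiE /phi; case: (ltngtP (level h i) t) => c; last by move: Nt; rewrite c eqxx.
    by rewrite -addn1 natrD addrAC subrr add0r.
  by rewrite subrr addr0 lerDl ler01.
apply: lerD => //; rewrite ler_pM2r ?invr_gt0 //.
by rewrite -[f.+1]addn1 natrD; lra.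
Qed.
End Prob.


Lemma sum_ind1 (R : realType) M a : (a < M)%N ->
  \sum_(k < M) ((k == a :> nat)%:R : R) = 1.
Proof.
move=> Ha; rewrite (bigD1 (Ordinal Ha)) //= eqxx big1 ?addr0 // => k nk.
suff -> : (k == a :> nat) = false by [].
by apply/negP => /eqP e; move: nk; rewrite -val_eqE /= e eqxx.
Qed.

Lemma sumsq_ind (R : realType) M a b (c : R) : (a < M)%N -> (b < M)%N ->
  \sum_(k < M) ((if (k == a :> nat) then c else 0) -
                (if (k == b :> nat) then c else 0)) ^+ 2 =
  if a == b then 0 else 2 * c ^+ 2.
Proof.
move=> Ha Hb; case: eqVneq => [<-|ne].
  by rewrite big1 // => k _; rewrite subrr expr0n.
rewrite (eq_bigr (fun k : 'I_M => (k == a :> nat)%:R * c ^+ 2 +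
                                  (k == b :> nat)%:R * c ^+ 2)); last first.
  move=> k _; case: (eqVneq (k : nat) a) => ka; case: (eqVneq (k : nat) b) => kb /=.
  - by move: ne; rewrite -ka -kb eqxx.
  - by rewrite subr0 mul1r mul0r addr0.
  - by rewrite sub0r sqrrN mul0r mul1r add0r.
  - by rewrite subrr expr0n /= !mul0r addr0.
by rewrite big_split /= -!big_distrl /= !sum_ind1 //; ring.
Qed.

Section Geo.
Variables (R : realType) (m N : nat) (L s : R).
Hypothesis N0 : (0 < N)%N.

Definition pt (p : nat) : 'rV[R]_(m + m * N) :=
  \row_(k < m + m * N) (if (k < m)%N then (if (k == (p %/ N)%N :> nat) then L else 0)
                        else (if (k - m == p)%N then s else 0)).

Lemma dist_sq p p' : (p < m * N)%N -> (p' < m * N)%N ->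
  \sum_(k < m + m * N) (pt p 0 k - pt p' 0 k) ^+ 2 =
  (if (p %/ N == p' %/ N)%N then 0 else 2 * L ^+ 2) + (if p == p' then 0 else 2 * s ^+ 2).
Proof.
move=> Hp Hp'; rewrite big_split_ord /=; congr (_ + _).
  under eq_bigr => k _ do rewrite !mxE /= (ltn_ord k).
  by apply: sumsq_ind; rewrite ltn_divLR.
under eq_bigr => k _ do rewrite !mxE /= ltnNge leq_addr /= addKn.
exact: sumsq_ind.
Qed.

Variables (eps r : R).
Hypotheses (L0 : 0 <= L) (r0 : 0 < r) (sr : 2 * s ^+ 2 = r ^+ 2)
  (eps0 : 0 < eps) (epsL : 1 <= eps * L) (epsr : eps * r < 1).

Definition Xs : seq 'rV[R]_(m + m * N) := map pt (iota 0 (m * N)).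

Lemma size_Xs : size Xs = (m * N)%N.
Proof. by rewrite size_map size_iota. Qed.

Lemma nth_Xs i : (i < m * N)%N -> nth 0 Xs i = pt i.
Proof. by move=> Hi; rewrite (nth_map 0%N) ?size_iota // nth_iota. Qed.

Lemma memXs x : x \in Xs -> exists2 p, (p < m * N)%N & x = pt p.
Proof. by case/mapP => p; rewrite mem_iota add0n => /andP[_ Hp] ->; exists p. Qed.

Lemma pt_in p : (p < m * N)%N -> pt p \in Xs.
Proof. by move=> Hp; apply: map_f; rewrite mem_iota add0n. Qed.

Lemma dist_pt p p' : (p < m * N)%N -> (p' < m * N)%N ->
  dist2 (pt p) (pt p') = Num.sqrt
  ((if (p %/ N == p' %/ N)%N then 0 else 2 * L ^+ 2) + (if p == p' then 0 else 2 * s ^+ 2)).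
Proof. by move=> Hp Hp'; rewrite /dist2 dist_sq. Qed.

Lemma dist_ge0 d (x y : 'rV[R]_d) : 0 <= dist2 x y.
Proof. exact: sqrtr_ge0. Qed.

Lemma dist_refl p : (p < m * N)%N -> dist2 (pt p) (pt p) = 0.
Proof. by move=> Hp; rewrite dist_pt // !eqxx addr0 sqrtr0. Qed.

Lemma dist_same p p' : (p < m * N)%N -> (p' < m * N)%N ->
  (p %/ N = p' %/ N)%N -> p <> p' -> dist2 (pt p) (pt p') = r.
Proof.
move=> Hp Hp' E ne; rewrite dist_pt // E eqxx add0r.
have -> : (p == p') = false by apply/eqP.
by rewrite sr sqrtr_sqr ger0_norm // ltW.
Qed.

Lemma dist_diff p p' : (p < m * N)%N -> (p' < m * N)%N ->
  (p %/ N <> p' %/ N)%N -> 1 <= eps * dist2 (pt p) (pt p').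
Proof.
move=> Hp Hp' ne; rewrite dist_pt //.
have -> : (p %/ N == p' %/ N)%N = false by apply/eqP.
apply: le_trans epsL _; rewrite ler_pM2l //.
rewrite -[X in X <= _](ger0_norm L0) -sqrtr_sqr ler_sqrt; last first.
  by apply: addr_ge0; [apply: mulr_ge0 => //; exact: sqr_ge0 | case: ifP => _ //; apply: mulr_ge0 => //; exact: sqr_ge0].
have := sqr_ge0 L; have : 0 <= (if p == p' then 0 else 2 * s ^+ 2).
  by case: ifP => _ //; apply: mulr_ge0 => //; exact: sqr_ge0.
lra.
Qed.

Lemma dist_ne p p' : (p < m * N)%N -> (p' < m * N)%N -> p <> p' ->
  r <= dist2 (pt p) (pt p').
Proof.
move=> Hp Hp' ne; case: (eqVneq (p %/ N)%N (p' %/ N)%N) => [E|E].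
  by rewrite dist_same.
have := dist_diff _ _ Hp Hp' (elimN eqP E) => H.
have : eps * r <= eps * dist2 (pt p) (pt p') by apply: ltW; apply: lt_le_trans H.
by rewrite ler_pM2l.
Qed.

Lemma pt_inj p p' : (p < m * N)%N -> (p' < m * N)%N -> pt p = pt p' -> p = p'.
Proof.
move=> Hp Hp' E; case: (eqVneq p p') => // ne.
have := dist_ne _ _ Hp Hp' (elimN eqP ne); rewrite E dist_refl // => H.
by move: r0; rewrite ltNge H.
Qed.

Lemma uniq_Xs : uniq Xs.
Proof.
rewrite map_inj_in_uniq ?iota_uniq // => p p'.
rewrite !mem_iota !add0n => /andP[_ Hp] /andP[_ Hp']; exact: pt_inj.
Qed.

Lemma index_pt p : (p < m * N)%N -> index (pt p) Xs = p.
Proof.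
by move=> Hp; rewrite -{1}(nth_Xs _ Hp) index_uniq ?size_Xs // uniq_Xs.
Qed.

Hypotheses (N2 : (1 < N)%N) (m0 : (0 < m)%N).

Lemma radius_Xs : opt_cluster_radius Xs m r.
Proof.
split.
  exists (map (fun j => pt (j * N)) (iota 0 m)); split.
  - rewrite map_inj_in_uniq ?iota_uniq // => a b.
    rewrite !mem_iota !add0n => /andP[_ Ha] /andP[_ Hb] E.
    have Ha' : (a * N < m * N)%N by rewrite ltn_pmul2r.
    have Hb' : (b * N < m * N)%N by rewrite ltn_pmul2r.
    by have /eqP := pt_inj _ _ Ha' Hb' E; rewrite eqn_pmul2r // => /eqP.
  - move=> x /mapP [a]; rewrite mem_iota add0n => /andP[_ Ha] ->.
    by apply: pt_in; rewrite ltn_pmul2r.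
  - by rewrite size_map size_iota.
  - move=> x /memXs [p Hp ->].
    have Hc : ((p %/ N) * N < m * N)%N.
      by rewrite ltn_pmul2r // ltn_divLR.
    exists (pt ((p %/ N) * N)).
      by apply: map_f; rewrite mem_iota add0n ltn_divLR.
    case: (eqVneq p ((p %/ N) * N)%N) => [E|ne].
      by rewrite -E dist_refl // ltW.
    by rewrite dist_same // ?mulnK //; apply/eqP.
move=> C uC sC szC.
have : ~~ all (fun x => x \in C) Xs.
  apply/negP => /allP H.
  have := uniq_leq_size uniq_Xs H; rewrite size_Xs szC.
  rewrite -{2}[m]muln1 leq_pmul2l //; lia.
case/allPn => x xX xC; exists x => // c cC.
case/memXs: xX xC => p Hp -> xC.
have cX := sC c cC; case/memXs: cX => p' Hp' Ec; rewrite Ec in cC *.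
by apply: dist_ne => // E; move: xC; rewrite E cC.
Qed.
End Geo.


Section Inst.
Variables (R : realType) (N T t0 : nat) (e : R).
Hypotheses (T0 : (0 < T)%N) (e0 : 0 <= e) (e1 : e <= 1).

Definition cv (w : R) (g : nat) : R := w * (g%:R / T%:R).
Definition jv (j i b : nat) : R :=
  if (i %/ N == j)%N then cv e b else cv e (minn b t0).
Definition iv (j p i b : nat) : R := if i == p then cv 1 b else jv j i b.

Lemma T0R : 0 < T%:R :> R. Proof. by rewrite ltr0n. Qed.

Lemma cv_ge0 w g : 0 <= w -> 0 <= cv w g.
Proof. by move=> w0; rewrite /cv mulr_ge0 // divr_ge0 // ltW // T0R. Qed.

Lemma cv_le w g : w <= 1 -> 0 <= w -> (g <= T)%N -> cv w g <= w.
Proof.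
move=> w1 w0 gT; rewrite /cv -[X in _ <= X]mulr1 ler_wpM2l //.
by rewrite ler_pdivrMr ?T0R // mul1r ler_nat.
Qed.

Lemma cv_T w : cv w T = w.
Proof. by rewrite /cv divff ?mulr1 // lt0r_neq0 // T0R. Qed.

Lemma cv_0 w : cv w 0 = 0.
Proof. by rewrite /cv mul0r mulr0. Qed.

Lemma cv_mono w g1 g2 : 0 <= w -> (g1 <= g2)%N -> cv w g1 <= cv w g2.
Proof.
move=> w0 g12; rewrite /cv ler_wpM2l // ler_pM2r ?invr_gt0 ?T0R //.
by rewrite ler_nat.
Qed.

Lemma cv_conc w g1 g2 g3 : 0 <= w -> (g1 + g3 <= g2 + g2)%N ->
  cv w g1 - cv w g2 <= cv w g2 - cv w g3.
Proof.
move=> w0 H; rewrite /cv -!mulrBr ler_wpM2l // -!mulrBl ler_pM2r ?invr_gt0 ?T0R //.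
have : (g1 + g3)%:R <= (g2 + g2)%:R :> R by rewrite ler_nat.
rewrite !natrD; lra.
Qed.

Lemma cvM w g : cv w g = w * cv 1 g.
Proof. by rewrite /cv mul1r. Qed.

Lemma iv_range j p i b : (b <= T)%N -> 0 <= iv j p i b <= 1.
Proof.
move=> bT; rewrite /iv /jv.
have H : forall w g, 0 <= w -> w <= 1 -> (g <= T)%N -> 0 <= cv w g <= 1.
  move=> w g w0 w1 gT; rewrite cv_ge0 //=; have := cv_le w g w1 w0 gT; lra.
case: ifP => _; first exact: H.
case: ifP => _; first exact: H.
apply: H => //; apply: leq_trans bT; exact: geq_minl.
Qed.

Lemma iv_mono j p i b1 b2 : (b1 <= b2)%N -> iv j p i b1 <= iv j p i b2.
Proof.
move=> b12; rewrite /iv /jv; case: ifP => _; first exact: cv_mono.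
case: ifP => _; first exact: cv_mono.
by apply: cv_mono => //; lia.
Qed.

Lemma iv_conc j p i b : (1 <= b)%N ->
  iv j p i b.+1 - iv j p i b <= iv j p i b - iv j p i b.-1.
Proof.
move=> b1; rewrite /iv /jv; case: ifP => _; first by apply: cv_conc => //; lia.
case: ifP => _; first by apply: cv_conc => //; lia.
by apply: cv_conc => //; lia.
Qed.

Lemma iv_le1T j p i : iv j p i T <= 1.
Proof. by case/andP: (iv_range j p i T (leqnn T)). Qed.

Lemma iv_pT j p : iv j p p T = 1.
Proof. by rewrite /iv eqxx cv_T. Qed.

Lemma iv_ge0 j p i b : 0 <= iv j p i b.
Proof.
rewrite /iv /jv; case: ifP => _; first exact: cv_ge0.
by case: ifP => _; exact: cv_ge0.
Qed.

Lemma iv_same j p i i' b : (p %/ N = j)%N -> (i %/ N = i' %/ N)%N ->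
  e * iv j p i' b <= iv j p i b.
Proof.
move=> pj ii'.
have Hc : forall w, 0 <= w -> w <= 1 -> e * cv w b <= cv e b.
  move=> w w0 w1; rewrite /cv.
  have x0 : 0 <= b%:R / T%:R :> R by rewrite divr_ge0 // ltW // T0R.
  rewrite mulrA ler_wpM2r //; rewrite -[X in _ <= X]mulr1 ler_wpM2l //.
rewrite /iv /jv.
case: (eqVneq i p) => [ip|ip]; case: (eqVneq i' p) => [i'p|i'p].
- by rewrite ler_piMl ?cv_ge0.
- rewrite -ii' ip pj eqxx; apply: le_trans (_ : cv e b <= _).
    by rewrite ler_piMl ?cv_ge0.
  by rewrite [cv e b]cvM ler_piMl ?cv_ge0.
- by rewrite ii' i'p pj eqxx; apply: Hc.
- by rewrite -ii'; case: ifP => c; rewrite ler_piMl ?cv_ge0.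
Qed.

Lemma iv_jv j p i b : i <> p -> iv j p i b = jv j i b.
Proof. by move=> ne; rewrite /iv; case: eqVneq. Qed.

Lemma iv_0 j p i : iv j p i 0 = jv j i 0.
Proof. by rewrite /iv /jv min0n !cv_0; case: ifP => //; case: ifP. Qed.

Lemma jv_ge0 j i b : 0 <= jv j i b.
Proof. by rewrite /jv; case: ifP => _; exact: cv_ge0. Qed.

Lemma jv_leT j i : jv j i T <= e.
Proof.
rewrite /jv; case: ifP => _; first exact: cv_le.
by apply: cv_le => //; exact: geq_minl.
Qed.

Lemma jv_out j i b : (i %/ N != j)%N -> jv j i b = cv e (minn b t0).
Proof. by rewrite /jv => /negbTE ->. Qed.

Lemma jv_low j i b : (b <= t0)%N -> jv j i b = cv e b.
Proof. by move=> bt; rewrite /jv (minn_idPl bt); case: ifP. Qed.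
End Inst.

Lemma key_ineq (R : realType) (th be k m Bn T t : R) :
  0 < th -> th < 1 -> 1 < be -> 0 < T -> 1 <= k -> Bn < k * T ->
  th * T < t + 1 -> 0 <= t -> be * k <= m -> 0 <= Bn ->
  (1 - th) * ((Bn / (t + 1) + 1) / m) < 1 / (th * (be - 1)).
Proof.
move=> th0 th1 be1 T0 k1 BkT thT t0 bkm B0.
have t1 : 0 < t + 1 by lra.
set u := Bn / (t + 1).
have u0 : 0 <= u by rewrite /u divr_ge0 // ltW.
have uE : u * (t + 1) = Bn by rewrite /u divfK // lt0r_neq0.
have uth : u * th < k.
  have : u * (th * T) <= u * (t + 1) by rewrite ler_wpM2l // ltW.
  rewrite uE => H.
  have : (u * th) * T < k * T by rewrite -mulrA; apply: le_lt_trans H BkT.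
  by rewrite ltr_pM2r.
have m0 : 0 < m.
  have H : 0 < be * k by apply: mulr_gt0; lra.
  exact: lt_le_trans H bkm.
have D0 : 0 < th * (be - 1) by apply: mulr_gt0; lra.
rewrite ltr_pdivlMr //.
have -> : (1 - th) * ((u + 1) / m) * (th * (be - 1)) =
  ((1 - th) * (u + 1) * (th * (be - 1))) / m by ring.
rewrite ltr_pdivrMr // mul1r.
have H1 : (1 - th) * (u + 1) * th < k.
  have -> : (1 - th) * (u + 1) * th = (1 - th) * (u * th) + (1 - th) * th by ring.
  have : (1 - th) * (u * th) < (1 - th) * k by rewrite ltr_pM2l; lra.
  have : th * (1 - th) <= th * k.
    rewrite ler_pM2l //; lra.
  nra.
have : (1 - th) * (u + 1) * th * (be - 1) < k * (be - 1).
  by rewrite ltr_pM2r //; lra.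
have : k * (be - 1) < be * k by nra.
have -> : (1 - th) * (u + 1) * (th * (be - 1)) = (1 - th) * (u + 1) * th * (be - 1) by ring.
lra.
Qed.


Lemma sum_ind_le1 (R : realType) (J : finType) (F : pred J) :
  (forall a b, F a -> F b -> a = b) -> \sum_j ((F j)%:R : R) <= 1.
Proof.
move=> H; case: (pickP F) => [a Fa|none].
  rewrite (bigD1 a) //= Fa big1 ?addr0 // => b nb.
  suff -> : F b = false by [].
  by apply/negP => Fb; move: nb; rewrite (H _ _ Fb Fa) eqxx.
by rewrite big1 ?ler01 // => b _; rewrite none.
Qed.

Lemma exists_le_avg (R : realType) M (F : 'I_M -> R) (S : R) : (0 < M)%N ->
  \sum_j F j <= S -> exists j, F j <= S / M%:R.
Proof.
move=> M0 HS; case: (pickP (fun j => F j <= S / M%:R)) => [j Hj|none].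
  by exists j.
exfalso.
have : \sum_(j < M) (S / M%:R) < \sum_j F j.
  apply: ltr_sum; first by apply/hasP; exists (Ordinal M0); rewrite ?mem_index_enum.
  by move=> j _; have := none j; rewrite /= ltNge => ->.
have E : forall c : R, c *+ M = c * M%:R by move=> c; rewrite mulr_natr.
rewrite sumr_const card_ord E divfK; last first.
  by rewrite lt0r_neq0 // ltr0n.
by rewrite ltNge HS.
Qed.

Lemma ratio_ok (R : realType) (a b c : R) :
  0 <= a -> 0 <= b -> c <= 1 -> c * b <= a -> ratio_ge a b c.
Proof.
move=> a0 b0 c1 H; split => // /eqP bn0.
by rewrite ler_pdivlMr // lt0r b0 bn0.
Qed.

Lemma final_ineq (R : realType) (e th x Hj P Hp c : R) :
  0 <= e -> 0 <= x -> x <= th -> 0 <= Hj -> Hj <= 1 -> Hj <= P -> th < 1 ->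
  Hp <= e * (c - (1 - th) * P) ->
  e * x + (e - e * x) * Hj + Hp <= (th + c) * e * 1.
Proof.
move=> e0 x0 xth H0 H1 HP th1 Hp1.
have F1 : 0 <= e * (th - x) * (1 - Hj).
  by apply: mulr_ge0; [apply: mulr_ge0 => //; lra | lra].
have F2 : 0 <= e * (1 - th) * (P - Hj).
  by apply: mulr_ge0; [apply: mulr_ge0 => //; lra | lra].
nra.
Qed.


Theorem theorem8 (R : realType) (eps beta theta r : R) (T B : nat) :
  0 < eps -> 1 < beta -> 0 < theta < 1 -> (0 < T)%N -> (T <= B)%N ->
  0 < r -> eps * r < 1 ->
  let k := (B %/ T).+1 in
  let m := `|Num.ceil (beta * k%:R)|%N in
  exists (d : nat) (X : seq 'rV[R]_d),
    uniq X /\ opt_cluster_radius X m r /\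
    forall (q : history R (size X) -> {ffun option 'I_(size X) -> R})
           (out : history R (size X) -> {ffun 'I_(size X) -> R}),
      (forall h, is_dist (q h)) -> (forall h, is_dist (out h)) ->
      exists A : 'rV[R]_d -> nat -> R,
        [/\ uvp_range T A, uvp_monotone T A, uvp_smooth T X eps A,
            uvp_concave T X A &
            exists2 xstar, xstar \in X &
              [/\ forall x, x \in X -> A x T <= A xstar T,
                  0 < A xstar T &
                  exp_acc T (fun i b => A (nth 0 X i) b) q out B [::]
                  <= (theta + 1 / (theta * (beta - 1))) * (1 - eps * r)
                     * A xstar T]].
Proof.
move=> eps0 be1 /andP[th0 th1] T0 TB r0 epsr k m.
set e := 1 - eps * r.
have e0 : 0 < e by rewrite /e subr_gt0.
have e1 : e <= 1.
  by rewrite /e lerBlDr lerDl; apply: mulr_ge0; apply: ltW.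
have e0' : 0 <= e := ltW e0.
set t0 := `|Num.floor (theta * T%:R)|%N.
have fl0 : (0 <= Num.floor (theta * T%:R))%R.
  by rewrite floor_ge0 mulr_ge0 // ltW.
have t0E : (t0%:R : R) = (Num.floor (theta * T%:R))%:~R.
  by rewrite natr_absz ger0_norm.
have t0le : t0%:R <= theta * T%:R.
  by rewrite t0E; case/andP: (floor_itv (theta * T%:R)).
have t0gt : theta * T%:R < t0%:R + 1.
  by rewrite t0E -[1]/(1%:~R) -intrD; case/andP: (floor_itv (theta * T%:R)).
have k1 : 1 <= (k%:R : R) by rewrite ler1n.
have BkT : (B%:R : R) < k%:R * T%:R by rewrite -natrM ltr_nat ltn_ceil.
have cl0 : (0 <= Num.ceil (beta * k%:R))%R.
  rewrite ceil_ge0; apply: lt_le_trans (_ : (-1 : R) < 0) _; first by rewrite ltrN10.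
  by apply: mulr_ge0; [lra | exact: ler0n].
have m_ge : beta * k%:R <= m%:R.
  by rewrite /m natr_absz ger0_norm //; exact: ceil_ge.
have m0R : (0 : R) < m%:R.
  apply: lt_le_trans m_ge; apply: mulr_gt0; [lra | apply: lt_le_trans ltr01 k1].
have m0 : (0 < m)%N by move: m0R; rewrite ltr0n.
have T0R : 0 < (T%:R : R) by rewrite ltr0n.
pose P : R := (B%:R / (t0%:R + 1) + 1) / m%:R.
have SP := @key_ineq R theta beta k%:R m%:R B%:R T%:R t0%:R th0 th1 be1 T0R k1 BkT t0gt (ler0n R t0) m_ge (ler0n R B).
rewrite -/P in SP.
pose S : R := 1 / (theta * (beta - 1)) - (1 - theta) * P.
have S0 : 0 < S by rewrite /S subr_gt0.
have eS : 0 < e * S by apply: mulr_gt0.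
have [N N2 NS] : exists2 N : nat, (1 < N)%N & (B%:R + 1) / N%:R <= e * S.
  set c := `|Num.ceil ((B%:R + 1) / (e * S))|%N.
  have H1 := ceil_ge ((B%:R + 1) / (e * S)).
  have H2 : (Num.ceil ((B%:R + 1) / (e * S)))%:~R <= c%:R :> R.
    by rewrite /c natr_absz ler_int ler_norm.
  exists c.+2; first by rewrite ltnS ltn0Sn.
  have H3 : c%:R <= (c.+2)%:R :> R by rewrite ler_nat -addn2 leq_addr.
  have H4 : (B%:R + 1) / (e * S) <= (c.+2)%:R := le_trans H1 (le_trans H2 H3).
  rewrite ler_pdivrMr ?ltr0n //.
  by rewrite ler_pdivrMr // mulrC in H4.
have N0 : (0 < N)%N by apply: ltnW.
pose L : R := 1 / eps.
pose s : R := r / Num.sqrt 2.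
have L0 : 0 <= L by rewrite /L divr_ge0 // ltW.
have epsL : 1 <= eps * L.
  by rewrite /L mul1r divff // lt0r_neq0.
have sr : 2 * s ^+ 2 = r ^+ 2.
  rewrite /s expr_div_n sqr_sqrtr ?ler0n //; field.
  by [].
have uX := @uniq_Xs R m N L s N0 eps r L0 r0 sr eps0 epsL epsr.
have idx := @index_pt R m N L s N0 eps r L0 r0 sr eps0 epsL epsr.
exists (m + m * N)%N, (Xs R m N L s).
split; first exact: uX.
split; first exact: (@radius_Xs R m N L s N0 eps r L0 r0 sr eps0 epsL epsr N2 m0).
move=> q out hq hout.
set X := Xs R m N L s.
have szX : size X = (m * N)%N := size_Xs R m N L s.
have PhiNil : forall t, Phi R (size X) t [::] = 0.
  by move=> t; rewrite /Phi big1 // => i _; rewrite /phi /level /=; case: ifP.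
have Hcl : forall i : 'I_(size X),
    \sum_(j < m) ((((i %/ N)%N == j :> nat) : bool)%:R : R) <= 1.
  move=> i; apply: sum_ind_le1 => a b /eqP Ha /eqP Hb; apply: val_inj.
  by rewrite /= -Ha -Hb.
have Hsum := @hit_sum R (size X) T q out hq hout 'I_m
  (fun (j : 'I_m) (i : 'I_(size X)) => (i %/ N)%N == j :> nat) t0
  (fun i b => jv R N T t0 e m i b) Hcl B [::].
have E1 : ((t0.+1)%:R : R) = t0%:R + 1 by rewrite -addn1 natrD.
rewrite PhiNil addr0 E1 in Hsum.
have [j Hj] := @exists_le_avg R m _ _ m0 Hsum.
rewrite -/P in Hj.
have Hpet : forall i : 'I_(size X),
    \sum_(l < N) (((i : nat) == (j * N + l)%N) : bool)%:R <= (1 : R).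
  move=> i; apply: sum_ind_le1 => a b /eqP Ha /eqP Hb; apply: val_inj.
  by apply/eqP; rewrite -(eqn_add2l (j * N)) -Ha -Hb.
have Hsum2 := @hit_sum R (size X) T q out hq hout 'I_N
  (fun (l : 'I_N) (i : 'I_(size X)) => (i : nat) == (j * N + l)%N) 0
  (fun i b => jv R N T t0 e j i b) Hpet B [::].
have E2 : ((0.+1)%:R : R) = 1 by rewrite mulr1n.
rewrite PhiNil addr0 E2 divr1 in Hsum2.
have [l Hl] := @exists_le_avg R N _ _ N0 Hsum2.
pose p := (j * N + l)%N.
have pj : (p %/ N)%N = j by rewrite /p divnMDl // divn_small // addn0.
have pX : (p < m * N)%N.
  apply: (@leq_trans (j.+1 * N)); last by rewrite leq_mul2r ltn_ord orbT.
  by rewrite /p mulSn addnC ltn_add2r ltn_ord.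
pose A := fun (x : 'rV[R]_(m + m * N)) (b : nat) =>
  if x \in X then iv R N T t0 e j p (index x X) b else 0.
have Apt : forall p', (p' < m * N)%N -> forall b,
    A (pt R m N L s p') b = iv R N T t0 e j p p' b.
  by move=> p' Hp' b; rewrite /A (pt_in R m N L s p' Hp') idx.
have Anth : forall (i : 'I_(size X)) b, A (nth 0 X i) b = iv R N T t0 e j p i b.
  move=> i b; have Hi : (i < m * N)%N := leq_trans (ltn_ord i) (eq_leq szX).
  by rewrite nth_Xs // Apt.
have Hd := dist_diff R m N L s N0 eps L0 eps0 epsL.
have Hs := dist_same R m N L s N0 r r0 sr.
have Hr := dist_refl R m N L s N0.
exists A; split.
- move=> x b /andP[b1 bT]; rewrite /A; case: ifP => _.
    exact: iv_range.
  by rewrite lexx ler01.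
- move=> x b1 b2 _ b12 _; rewrite /A; case: ifP => _ //.
  exact: iv_mono.
- move=> xi xj /memXs [pi Hpi ->] /memXs [pj' Hpj ->] b _.
  rewrite !Apt //.
  apply: ratio_ok; [exact: iv_ge0 | exact: iv_ge0 | | ].
    rewrite lerBlDr lerDl; apply: mulr_ge0; [exact: ltW | exact: dist_ge0].
  case: (eqVneq (pi %/ N)%N (pj' %/ N)%N) => [E|E].
    case: (eqVneq pi pj') => [Epp|ne].
      by rewrite Epp Hr // mulr0 subr0 mul1r.
    rewrite Hs //; last exact/eqP.
    exact: iv_same.
  have := Hd pi pj' Hpi Hpj (elimN eqP E) => H1.
  apply: le_trans (iv_ge0 _ _ _ _ _ e0' _ _ _ _).
  apply: mulr_le0_ge0; last exact: iv_ge0.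
  by rewrite subr_le0.
- move=> x /memXs [pi Hpi ->] b b2 bT; rewrite !Apt //.
  by apply: iv_conc => //; exact: ltnW.
exists (pt R m N L s p); first exact: pt_in.
split.
- move=> x /memXs [pi Hpi ->]; rewrite !Apt // iv_pT //.
  exact: iv_le1T.
- by rewrite Apt // iv_pT // ltr01.
rewrite Apt // iv_pT //.
have C1 := @coupling R (size X) T q out hq hout (fun i b => A (nth 0 X i) b)
  (fun i b => jv R N T t0 e j i b) (fun i : 'I_(size X) => (i : nat) == p) 0 0 1.
have h2 : forall i : 'I_(size X), A (nth 0 X i) T <= 1.
  by move=> i; rewrite Anth; exact: iv_le1T.
have h3 : forall i : 'I_(size X), ~~ ((i : nat) == p) ->
    A (nth 0 X i) T = jv R N T t0 e j i T.
  by move=> i /eqP ne; rewrite Anth iv_jv.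
have h4 : forall (i : 'I_(size X)) b, ~~ ((i : nat) == p) || (b <= 0)%N ->
    A (nth 0 X i) b = jv R N T t0 e j i b.
  move=> i b /orP [/eqP ne | b0]; rewrite Anth; first by rewrite iv_jv.
  by rewrite leqn0 in b0; rewrite (eqP b0) iv_0.
have C1' := C1 (fun i => jv_ge0 R N T t0 e e0' j i T) h2 h3 h4
  B [::] (fun i _ => leqnn 0).
clear C1.
have nm : forall i : 'I_(size X), (i %/ N)%N != m.
  move=> i; have Hi : (i < m * N)%N := leq_trans (ltn_ord i) (eq_leq szX).
  by rewrite neq_ltn ltn_divLR // Hi.
pose lo := cv R T e (minn T t0).
have C2 := @coupling R (size X) T q out hq hout
  (fun i b => jv R N T t0 e j i b) (fun i b => jv R N T t0 e m i b)
  (fun i : 'I_(size X) => (i %/ N)%N == j) t0 lo e.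
have k1' : forall i : 'I_(size X), lo <= jv R N T t0 e m i T.
  by move=> i; rewrite jv_out.
have k3 : forall i : 'I_(size X), ~~ ((i %/ N)%N == j) ->
    jv R N T t0 e j i T = jv R N T t0 e m i T.
  by move=> i nj; rewrite !jv_out.
have k4 : forall (i : 'I_(size X)) b, ~~ ((i %/ N)%N == j) || (b <= t0)%N ->
    jv R N T t0 e j i b = jv R N T t0 e m i b.
  move=> i b; case: (boolP ((i %/ N)%N == j)) => /= ij bt.
    by rewrite !jv_low.
  by rewrite !jv_out.
have C2' := C2 k1' (fun i => jv_leT R N T t0 e T0 e0' e1 j i) k3 k4
  B [::] (fun i _ => leq0n t0).
clear C2.
have g1 : forall i : 'I_(size X), jv R N T t0 e m i T <= lo.
  by move=> i; rewrite jv_out.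
have C3 := @exp_le R (size X) T q out hq hout (fun i b => jv R N T t0 e m i b) lo
  g1 B [::].
have HjB := hit_bounds R (size X) T q out hq hout (fun i b => jv R N T t0 e m i b)
  (fun i : 'I_(size X) => (i %/ N)%N == j) t0 B [::].
case/andP: HjB => Hj0 Hj1.
have Hl' := le_trans Hl NS.
rewrite subr0 mul1r in C1'.
set Hjv := hit _ _ _ _ _ _ (fun i : 'I_(size X) => (i %/ N)%N == j) _ _ _ in Hj C2' Hj0 Hj1.
set Hlv := hit _ _ _ _ _ _ (fun i : 'I_(size X) => (i : nat) == p) _ _ _ in Hl' C1'.
have loE : lo = e * ((minn T t0)%:R / T%:R) by [].
have x0 : 0 <= (minn T t0)%:R / T%:R :> R by rewrite divr_ge0 // ltW.
have xth : (minn T t0)%:R / T%:R <= theta.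
  rewrite ler_pdivrMr //; apply: le_trans t0le; rewrite ler_nat; exact: geq_minr.
have F := @final_ineq R e theta _ Hjv P Hlv (1 / (theta * (beta - 1))) e0' x0 xth Hj0 Hj1 Hj th1 Hl'.
rewrite -loE in F.
apply: le_trans C1' _; apply: le_trans F.
apply: lerD => //; apply: le_trans C2' _.
by rewrite lerD2r.
Qed.
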